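(* Let $k$ be a difference field of characteristic $0$, $R=k\{y_1,\ldots,y_n\}$, and $I$ a monomial $\sigma$-ideal of $R$ with support set $S=\{\mathbf{u}\in\mathbb{N}[x]^n:\mathbf{y}^{\mathbf{u}}\in I\}$. Then $I$ is radical and well-mixed if and only if: (a) for all $m\in\mathbb{N}\setminus\{0\}$ and $\mathbf{u}\in\mathbb{N}[x]^n$, $m\mathbf{u}\in S$ implies $\mathbf{u}\in S$; and (b) for all $\mathbf{u},\mathbf{v}\in\mathbb{N}[x]^n$, $\mathbf{u}+\mathbf{v}\in S$ implies $\mathbf{u}+x\mathbf{v}\in S$.
   Context: A difference field is a field $k$ with a ring endomorphism $\sigma$; $R=k\{y_1,\ldots,y_n\}$ is the polynomial ring over $k$ in the variables $\sigma^j(y_i)$, with $\sigma$ extended naturally. For $p=\sum_ic_ix^i\in\mathbb{N}[x]$ and $a\in R$, $a^p=\prod_i(\sigma^i(a))^{c_i}$; $\mathbf{y}^{\mathbf{u}}=y_1^{u_1}\cdots y_n^{u_n}$. A $\sigma$-ideal is an ideal stable under $\sigma$; monomial if generated by monomials; well-mixed if $ab\in I\Rightarrow a\sigma(b)\in I$; radical means radical as an ideal. *)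

(* Defs.v *)
From HB Require Import structures.
From mathcomp Require Import all_boot all_order all_algebra.
From mathcomp Require Import finmap.
From mathcomp.multinomials Require Import monalg.
Set Implicit Arguments.
Unset Strict Implicit.
Unset Printing Implicit Defensive.
Import GRing.Theory.
Local Open Scope ring_scope.

(* The difference polynomial ring R = k{y_1,...,y_n}: the polynomial ring over k
   in the variables sigma^j(y_i), i < n, j in N.  The variable sigma^j(y_i) is
   indexed by the pair (i, j). *)
Definition dvar (n : nat) := ('I_n * nat)%type.
Definition dpoly (k : fieldType) (n : nat) := {malg k[cmonom (dvar n)]}.

Definition dX (k : fieldType) (n : nat) (v : dvar n) : dpoly k n :=
  << ucm v >>.

(* the natural extension of sigma : k -> k to R: coefficients are mapped by
   sigma and each variable sigma^j(y_i) is sent to sigma^(j+1)(y_i). *)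
Definition dsigma (k : fieldType) (sigma : {rmorphism k -> k}) (n : nat)
    (g : dpoly k n) : dpoly k n :=
  \sum_(m <- msupp g)
     (sigma (g@_m))%:MP *
     \prod_(v <- finsupp (m : {fsfun of _ : dvar n => 0%N}))
        dX k (v.1, v.2.+1) ^+ (m v).

(* a^p = prod_i (sigma^i a)^(c_i) for p = sum_i c_i x^i in N[x] *)
Definition dpow (k : fieldType) (sigma : {rmorphism k -> k}) (n : nat)
    (a : dpoly k n) (p : {poly nat}) : dpoly k n :=
  \prod_(i < size p) (iter i (@dsigma k sigma n) a) ^+ (p`_i)%R.

Definition ymon (k : fieldType) (sigma : {rmorphism k -> k}) (n : nat)
    (u : 'I_n -> {poly nat}) : dpoly k n :=
  \prod_(i < n) @dpow k sigma n (dX k (i, 0%N)) (u i).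

Definition is_ideal (R : comRingType) (I : R -> Prop) : Prop :=
  [/\ I 0,
      (forall a b, I a -> I b -> I (a + b)) &
      (forall r a, I a -> I (r * a))].

Definition ideal_gen (R : comRingType) (G : R -> Prop) (a : R) : Prop :=
  exists s : seq (R * R),
    (forall p, p \in s -> G p.2) /\ a = \sum_(p <- s) p.1 * p.2.

Definition sigma_ideal (k : fieldType) (sigma : {rmorphism k -> k}) (n : nat)
    (I : dpoly k n -> Prop) : Prop :=
  is_ideal I /\ (forall a, I a -> I (dsigma sigma a)).

Definition monomial_ideal (k : fieldType) (sigma : {rmorphism k -> k}) (n : nat)
    (I : dpoly k n -> Prop) : Prop :=
  exists U : ('I_n -> {poly nat}) -> Prop,
    forall a, I a <-> ideal_gen (fun b => exists2 u, U u & b = ymon sigma u) a.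

Definition well_mixed (k : fieldType) (sigma : {rmorphism k -> k}) (n : nat)
    (I : dpoly k n -> Prop) : Prop :=
  forall a b, I (a * b) -> I (a * dsigma sigma b).

Definition radical_ideal (R : comRingType) (I : R -> Prop) : Prop :=
  forall (a : R) (m : nat), (0 < m)%N -> I (a ^+ m) -> I a.

(* Main.v *)
Require Import Defs.
From HB Require Import structures.
From mathcomp Require Import all_boot all_order all_algebra.
From mathcomp Require Import finmap.
From mathcomp.multinomials Require Import monalg.
From mathcomp.multinomials Require Import mpoly.
Import monalg.
Set Implicit Arguments.
Unset Strict Implicit.
Unset Printing Implicit Defensive.
Import GRing.Theory.
Local Open Scope ring_scope.


Section Mon.
Variables (k : fieldType) (n : nat).
Local Notation M := (cmonom (dvar n)).
Local Notation R := (dpoly k n).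
Local Notation "'U_(' i )" := (@ucm (dvar n) i).

Definition powm (t : M) (e : nat) : M := \big[@mmul _/@mone _]_(i < e) t.

Lemma cm_big (T : Type) (r : seq T) (P : pred T) (F : T -> M) v :
  (\big[@mmul _/@mone _]_(x <- r | P x) F x) v = (\sum_(x <- r | P x) F x v)%N.
Proof. exact: (big_morph (fun m : M => m v) (fun a b => cmM v a b) (cm1 v)). Qed.

Lemma powmE t e v : powm t e v = (e * t v)%N.
Proof. by rewrite /powm cm_big sum_nat_const card_ord. Qed.

Lemma malgUM (m1 m2 : M) : << (mmul m1 m2) >> = << m1 >> * << m2 >> :> R.
Proof. by rewrite malgM_def fgmulUU mulr1. Qed.

Lemma malgU1 : << (@mone M) >> = 1 :> R.
Proof. by []. Qed.

Lemma malgU_big (T : Type) (r : seq T) (P : pred T) (F : T -> M) :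
  << \big[@mmul _/@mone _]_(x <- r | P x) F x >> = \prod_(x <- r | P x) << F x >> :> R.
Proof. exact: (big_morph (fun m : M => << m >> : R) malgUM malgU1). Qed.

Lemma malgU_pow t e : << powm t e >> = << t >> ^+ e :> R.
Proof. by rewrite /powm malgU_big prodr_const card_ord. Qed.

Definition sh (m : M) : M :=
  \big[@mmul _/@mone _]_(v <- finsupp m) powm U_((v.1, v.2.+1)) (m v).

Lemma dsigmaU (sigma : {rmorphism k -> k}) (m : M) :
  dsigma sigma << m >> = << sh m >>.
Proof.
rewrite /dsigma msuppU1 big_seq_fset1 mcoeffUU rmorph1 mpolyC1E mul1r.
rewrite /sh malgU_big; apply: eq_bigr => v _; by rewrite malgU_pow.
Qed.

Lemma sum_pick (T : eqType) (s : seq T) (F : T -> nat) (x : T) :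
  uniq s -> (\sum_(v <- s) F v * (v == x))%N = if x \in s then F x else 0%N.
Proof.
elim: s => [|y s IH] /=; first by rewrite big_nil.
case/andP=> ys us; rewrite big_cons IH // in_cons.
case: (eqVneq y x) => [<-|nyx] /=.
  by rewrite (negbTE ys) muln1 addn0.
by rewrite muln0 add0n.
Qed.

Lemma shE (m : M) i j : sh m (i, j) = if j is j'.+1 then m (i, j') else 0%N.
Proof.
rewrite /sh cm_big.
under eq_bigr => v _ do rewrite powmE cmU.
case: j => [|j].
  by rewrite big1 // => v _; rewrite /eq_op /= andbF muln0.
have -> : (\sum_(v <- finsupp m) m v * ((v.1, v.2.+1) == (i, j.+1)))%N =
          (\sum_(v <- finsupp m) m v * (v == (i, j)))%N.
  by apply: eq_bigr => -[a b] _; rewrite /eq_op /=.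
rewrite sum_pick ?fset_uniq //; case: finsuppP => //.
Qed.
End Mon.

Section Mon2.
Variables (k : fieldType) (n : nat).
Local Notation M := (cmonom (dvar n)).
Local Notation R := (dpoly k n).
Local Notation "'U_(' i )" := (@ucm (dvar n) i).

Definition mon_of (u : 'I_n -> {poly nat}) : M :=
  \big[@mmul _/@mone _]_(i < n) \big[@mmul _/@mone _]_(j < size (u i))
     powm U_((i, (j : nat))) ((u i)`_j)%R.

Lemma monE u i0 j0 : mon_of u (i0, j0) = (u i0)`_j0.
Proof.
rewrite /mon_of cm_big (bigD1 i0) //=.
rewrite [X in (_ + X)%N](_ : _ = 0%N) ?addn0; last first.
  apply: big1 => i ni; rewrite cm_big; apply: big1 => j _.
  by rewrite powmE cmU /eq_op /= (negbTE ni) muln0.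
rewrite cm_big.
under eq_bigr => j _ do rewrite powmE cmU /eq_op /= eqxx /=.
rewrite -(big_mkord xpredT (fun j => ((u i0)`_j)%R * (j == j0))%N).
rewrite /index_iota subn0 sum_pick ?iota_uniq // mem_iota add0n /=.
by case: ltnP => // h; rewrite nth_default.
Qed.

Lemma mon_ext (m1 m2 : M) : (forall i j, m1 (i, j) = m2 (i, j)) -> m1 = m2.
Proof. by move=> h; apply/eqP/cmP => -[i j]. Qed.

Lemma natMn (x m : nat) : (x *+ m)%R = (m * x)%N.
Proof. by elim: m => [|m IH]; rewrite ?mulr0n // mulrS IH mulSn. Qed.

Lemma mon_Mn u m : mon_of (fun i => u i *+ m) = powm (mon_of u) m.
Proof. by apply: mon_ext => i j; rewrite powmE !monE coefMn natMn. Qed.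

Lemma mon_D u v : mon_of (fun i => u i + v i) = mmul (mon_of u) (mon_of v).
Proof. by apply: mon_ext => i j; rewrite cmM !monE coefD. Qed.

Lemma mon_X v : mon_of (fun i => 'X * v i) = sh (mon_of v).
Proof.
apply: mon_ext => i j; rewrite shE monE coefXM; case: j => [|j] //=; by rewrite monE.
Qed.

Lemma mon_surj (m : M) : exists u, mon_of u = m.
Proof.
pose B := (\max_(v <- finsupp m) v.2.+1)%N.
exists (fun i => \poly_(j < B) m (i, j)); apply: mon_ext => i j.
rewrite monE coef_poly; case: ltnP => // hB.
suff /eqP-> : m (i, j) == 0%N by []; rewrite cmE_eq0; apply/negP => hin.
have := @leq_bigmax_seq _ (enum_fset (finsupp m)) xpredT (fun v : dvar n => v.2.+1) _ hin isT.
by rewrite -/B /= => h; move: (leq_trans h hB); rewrite ltnn.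
Qed.

Lemma shU (v : dvar n) : sh U_(v) = U_((v.1, v.2.+1)).
Proof.
apply: mon_ext => i j; rewrite shE !cmU; case: j => [|j].
  by case: v => a b; rewrite !xpair_eqE andbF.
rewrite cmU; case: v => a b; by rewrite /= !xpair_eqE eqSS.
Qed.

Lemma ymonE (sigma : {rmorphism k -> k}) u : ymon sigma u = << mon_of u >> :> R.
Proof.
rewrite /ymon /mon_of malgU_big; apply: eq_bigr => i _.
rewrite /dpow malgU_big; apply: eq_bigr => j _.
rewrite malgU_pow.
suff -> : forall j0 : nat, iter j0 (dsigma sigma (n:=n)) (dX k (i, 0%N)) = << ucm (i, j0) >> by [].
elim=> [|j' IH]; first by rewrite /= /dX.
rewrite iterS IH dsigmaU (shU (i, j')).
reflexivity.
Qed.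
End Mon2.

Section Psi.
Variables (k : fieldType) (n : nat).
Local Notation M := (cmonom (dvar n)).
Local Notation R := (dpoly k n).
Variable (V : {fset dvar n}).
Local Notation N := (size (enum_fset V)).
Local Notation MP := (mpoly.mpoly N k).

Definition enc (m : M) : mpoly.multinom N :=
  mpoly.Multinom [tuple m (tnth (in_tuple (enum_fset V)) i) | i < N].

Lemma encE m i : mpoly.fun_of_multinom (enc m) i = m (tnth (in_tuple (enum_fset V)) i).
Proof. by rewrite /enc mpoly.multinomE tnth_mktuple. Qed.

Definition hV (m : M) : MP :=
  if (finsupp m `<=` V)%fset then mpoly.mpolyX k (enc m) else 0.

Lemma hV_mmorph : mmorphism hV.
Proof.
split.
  move=> m1 m2; rewrite /hV mdomD fsubUset.
  case: (finsupp m1 `<=` V)%fset; case: (finsupp m2 `<=` V)%fset;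
    rewrite ?mul0r ?mulr0 //.
  rewrite -mpoly.mpolyXD; congr (mpoly.mpolyX _ _).
  by apply/mpoly.mnmP => i; rewrite mpoly.mnmDE !encE cmM.
rewrite /hV mdom1 fsub0set -(mpoly.mpolyX0 N k); congr (mpoly.mpolyX _ _).
by apply/mpoly.mnmP => i; rewrite encE cm1 /mpoly.mnm0 mpoly.multinomE tnth_mktuple.
Qed.

HB.instance Definition _ := monalg.isMultiplicative.Build M MP hV hV_mmorph.

Definition psi (f : R) : MP := mmap (mpoly.mpolyC N (R:=k)) hV f.

Lemma psiM f g : psi (f * g) = psi f * psi g.
Proof. exact: rmorphM. Qed.

Lemma psiX f e : psi (f ^+ e) = psi f ^+ e.
Proof. exact: rmorphXn. Qed.

Lemma supp0 (m : M) v : v \notin finsupp m -> m v = 0%N.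
Proof. by rewrite -cmE_eq0 => /eqP. Qed.

Lemma enc_inj (m1 m2 : M) : (finsupp m1 `<=` V)%fset -> (finsupp m2 `<=` V)%fset ->
  enc m1 = enc m2 -> m1 = m2.
Proof.
move=> s1 s2 e; apply/eqP/cmP => v.
have [vV|vV] := boolP (v \in V).
  have : v \in in_tuple (enum_fset V) by [].
  case/tnthP=> i ->; by rewrite -!encE e.
rewrite !supp0 //; apply/negP => h; move/negP: vV; apply.
  by apply: (fsubsetP s2).
by apply: (fsubsetP s1).
Qed.

Lemma psi_kill (f : R) : (forall m, m \in msupp f -> ~~ (finsupp m `<=` V)%fset) -> psi f = 0.
Proof.
move=> h; rewrite /psi mmapE big_seq big1 // => m /h hm.
by rewrite /hV (negbTE hm) mulr0.
Qed.

Lemma psi_coef (f : R) (m : M) : (finsupp m `<=` V)%fset ->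
  mpoly.mcoeff (enc m) (psi f) = monalg.mcoeff m f.
Proof.
move=> sm; rewrite /psi mmapE raddf_sum /=.
have [mf|mf] := boolP (m \in msupp f); last first.
  rewrite (monalg.mcoeff_outdom mf) big_seq big1 // => m' m'f.
  rewrite mpoly.mcoeffCM /hV; case: ifP => sm'; last by rewrite mpoly.mcoeff0 mulr0.
  rewrite mpoly.mcoeffX; case: eqP => [/enc_inj|]; last by rewrite mulr0.
  by move=> /(_ sm' sm) ee; move: mf; rewrite -ee m'f.
rewrite (bigD1_seq m) //=; last exact: fset_uniq.
rewrite big_seq_cond big1 ?addr0; last first.
  move=> m' /andP[m'f nm]; rewrite mpoly.mcoeffCM /hV.
  case: ifP => sm'; last by rewrite mpoly.mcoeff0 mulr0.
  rewrite mpoly.mcoeffX; case: eqP => [/enc_inj|]; last by rewrite mulr0.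
  by move=> /(_ sm' sm) ee; rewrite ee eqxx in nm.
by rewrite mpoly.mcoeffCM /hV sm mpoly.mcoeffX eqxx mulr1.
Qed.

Lemma psi_neq0 (f : R) (m : M) : m \in msupp f -> (finsupp m `<=` V)%fset -> psi f != 0.
Proof.
move=> mf sm; apply/eqP => h.
have := psi_coef f sm; rewrite h mpoly.mcoeff0 => /esym/eqP.
by rewrite monalg.mcoeff_eq0 mf.
Qed.

Lemma psi_eq0 (f : R) : psi f = 0 -> forall m, m \in msupp f -> ~~ (finsupp m `<=` V)%fset.
Proof. by move=> h m mf; apply/negP => sm; move: (psi_neq0 mf sm); rewrite h eqxx. Qed.
End Psi.

From Stdlib Require Import Classical.

Section Main.
Variables (k : fieldType) (sigma : {rmorphism k -> k}) (n : nat)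
  (I : dpoly k n -> Prop).
Local Notation M := (cmonom (dvar n)).
Local Notation R := (dpoly k n).
Local Notation "'U_(' i )" := (@ucm (dvar n) i).
Hypothesis HI : is_ideal I.
Hypothesis Hmon : monomial_ideal sigma I.

Lemma I0 : I 0. Proof. by case: HI. Qed.
Lemma Iadd a b : I a -> I b -> I (a + b). Proof. by case: HI => _ H _; apply: H. Qed.
Lemma Imul r a : I a -> I (r * a). Proof. by case: HI => _ _; apply. Qed.

Lemma I_sum (T : eqType) (r : seq T) (F : T -> R) :
  (forall x, x \in r -> I (F x)) -> I (\sum_(x <- r) F x).
Proof.
elim: r => [|x r IH] h; first by rewrite big_nil; exact: I0.
rewrite big_cons; apply: Iadd; first by apply: h; rewrite mem_head.
by apply: IH => y yr; apply: h; rewrite inE yr orbT.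
Qed.

Lemma I_mon (f : R) : I f -> forall m, m \in msupp f -> I << m >>.
Proof.
case: Hmon => U HU; move/HU => [s [Hs ->]] {f}.
elim: s Hs => [|p s IH] Hs m.
  by rewrite big_nil msupp0 in_fset0.
rewrite big_cons => /(fsubsetP (msuppD_le _ _)); rewrite in_fsetU => /orP[|].
  have [u Uu ep2] := Hs p (mem_head _ _).
  have Iu : I << mon_of u >>.
    rewrite -(ymonE sigma); apply/HU; exists [:: (1, ymon sigma u)]; split.
      move=> q; rewrite inE => /eqP ->; exists u => //.
    rewrite big_cons big_nil addr0 mul1r; reflexivity.
  rewrite ep2 (ymonE sigma) => /msuppM_le [k1 [k2 [_]]].
  rewrite msuppU1 in_fset1 => /eqP -> ->.
  by rewrite malgUM; apply: Imul.
by apply: IH => q qs; apply: Hs; rewrite inE qs orbT.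
Qed.

End Main.

From Stdlib Require Import Classical.

Section Main2.
Variables (k : fieldType) (sigma : {rmorphism k -> k}) (n : nat)
  (I : dpoly k n -> Prop).
Local Notation M := (cmonom (dvar n)).
Local Notation R := (dpoly k n).
Local Notation "'U_(' i )" := (@ucm (dvar n) i).
Hypothesis HI : is_ideal I.
Hypothesis Hmon : monomial_ideal sigma I.
Local Notation I_mon := (I_mon HI Hmon).
Local Notation Imul := (Imul HI).
Local Notation I_sum := (I_sum HI).

Lemma malgUC (c : k) (m : M) : << c *g m >> = << c *g (@mone M) >> * << m >> :> R.
Proof. by rewrite malgM_def fgmulUU mulr1 mul1m. Qed.

Lemma I_of_mon (f : R) : (forall m, m \in msupp f -> I << m >>) -> I f.
Proof.
move=> h; rewrite (monalgE f); apply: I_sum => m mf.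
by rewrite malgUC; apply: Imul; apply: h.
Qed.

Lemma Idiv (r m : M) : I << r >> -> (forall v, r v <= m v)%N -> I << m >>.
Proof.
move=> Ir h.
have -> : m = mmul r (divcm m r) by apply/eqP/cmP => v; rewrite cmM divcmE subnKC.
by rewrite malgUM mulrC; apply: Imul.
Qed.

Lemma mdeg_ge (r : M) v : (r v <= mdeg r)%N.
Proof.
have [vr|vr] := boolP (v \in finsupp r); last by rewrite supp0.
by rewrite mdegE (bigD1_seq v) ?fset_uniq //= leq_addr.
Qed.

Lemma kill_t (HA : forall (t : M) e, (0 < e)%N -> I << powm t e >> -> I << t >>)
  (t : M) : ~ I << t >> -> forall r, I << r >> -> ~~ (finsupp r `<=` finsupp t)%fset.
Proof.
move=> nt r Ir; apply/negP => sub; apply: nt; apply: (HA _ _ (ltn0Sn (mdeg r))).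
apply: (Idiv Ir) => v; rewrite powmE.
have [vr|vr] := boolP (v \in finsupp r); last by rewrite supp0.
have := fsubsetP sub v vr; rewrite -cmE_neq0 -lt0n => tv.
apply: leq_trans (mdeg_ge r v) _; apply: leq_trans (leqnSn _) _.
by rewrite leq_pmulr.
Qed.

Lemma exists_bad (f : R) : ~ I f -> exists2 t, t \in msupp f & ~ I << t >>.
Proof.
move=> nf; apply: NNPP => h; apply: nf; apply: I_of_mon => m mf.
by apply: NNPP => nm; apply: h; exists m.
Qed.

Lemma radical_of (HA : forall (t : M) e, (0 < e)%N -> I << powm t e >> -> I << t >>) :
  radical_ideal I.
Proof.
move=> a e e0 Ia; apply: NNPP => /exists_bad [t ta nt].
have : psi (finsupp t) (a ^+ e) = 0.
  by apply: psi_kill => m /(I_mon Ia) Im; apply: (kill_t HA nt Im).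
rewrite psiX; apply/eqP; rewrite expf_neq0 //.
exact: psi_neq0 ta (fsubset_refl _).
Qed.

Lemma dsigmaE (b : R) : dsigma sigma b = \sum_(m <- msupp b) << sigma (monalg.mcoeff m b) *g sh m >>.
Proof.
rewrite /dsigma; apply: eq_bigr => m _; rewrite [in RHS]malgUC /sh [in RHS]malgU_big.
under [X in _ = _ * X]eq_bigr => v _ do rewrite malgU_pow.
rewrite /dX; reflexivity.
Qed.

Lemma msupp_sumU (r : seq M) (c : M -> k) m :
  m \in msupp (\sum_(s <- r) << c s *g sh s >> : R) -> exists2 s, s \in r & m = sh s.
Proof.
elim: r => [|s r IH].
  by rewrite big_nil msupp0 in_fset0.
rewrite big_cons => /(fsubsetP (msuppD_le _ _)); rewrite in_fsetU => /orP[|].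
  move/(fsubsetP msuppU_le); rewrite in_fset1 => /eqP ->.
  by exists s; [exact: mem_head | reflexivity].
by case/IH => s' s'r ->; exists s'; [rewrite inE s'r orbT | reflexivity].
Qed.

Lemma msupp_dsigma (b : R) m : m \in msupp (dsigma sigma b) -> exists2 s, s \in msupp b & m = sh s.
Proof.
rewrite dsigmaE => /msupp_sumU [s sr ->]; exists s; [exact: sr | reflexivity].
Qed.

Lemma psi_mono (V V' : {fset dvar n}) (f : R) : psi V f != 0 -> (V `<=` V')%fset -> psi V' f != 0.
Proof.
move=> h sub.
have [m mf mV] : exists2 m, m \in msupp f & (finsupp m `<=` V)%fset.
  apply: NNPP => nh; move/eqP: h; apply; apply: psi_kill => m mf.
  by apply/negP => mV; apply: nh; exists m.
exact: psi_neq0 mf (fsubset_trans mV sub).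
Qed.

Lemma wm_of (HA : forall (t : M) e, (0 < e)%N -> I << powm t e >> -> I << t >>)
  (HB : forall m1 m2 : M, I << mmul m1 m2 >> -> I << mmul m1 (sh m2) >>) :
  well_mixed sigma I.
Proof.
move=> a b Iab; apply: NNPP => /exists_bad [t ta nt].
pose W := (\bigcup_(s <- msupp b) finsupp s)%fset.
pose Good (V : {fset dvar n}) := [/\ forall r, I << r >> -> ~~ (finsupp r `<=` V)%fset,
   psi V a != 0 & psi V (dsigma sigma b) != 0].
have step : forall V, Good V -> exists y, y \in (W `\` V)%fset /\ Good (y |` V)%fset.
  move=> V [kV pa ps].
  have pb : psi V b = 0.
    have : psi V (a * b) = 0 by apply: psi_kill => m /(I_mon Iab) /kV.
    by rewrite psiM => /eqP; rewrite mulf_eq0 (negbTE pa) /= => /eqP.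
  have [m' m'in m'V] : exists2 m', m' \in msupp (dsigma sigma b) & (finsupp m' `<=` V)%fset.
    apply: NNPP => h; move/eqP: ps; apply; apply: psi_kill => m mm.
    by apply/negP => hm; apply: h; exists m.
  have [s sb es] := msupp_dsigma m'in.
  have := psi_eq0 pb sb; case/fsubsetPn => y ys yV.
  have yV' : ((y.1, y.2.+1) \in V)%fset.
    apply: (fsubsetP m'V); rewrite es -cmE_neq0.
    by case: y ys yV => a0 b0 ys yV; rewrite shE /= cmE_neq0.
  exists y; split.
    rewrite in_fsetD yV /=.
    exact: (fsubsetP (bigfcup_sup _ sb isT)).
  split.
  - move=> r Ir; apply/negP => sub.
    pose r' := divcm r (powm U_(y) (r y)).
    have r'E : forall v, r' v = if v == y then 0%N else r v.
      move=> v; rewrite /r' divcmE powmE cmU.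
      case: (eqVneq v y) => [->|nv] /=; first by rewrite muln1 subnn.
      by rewrite muln0 subn0.
    have Ir'y : I << mmul r' U_(y) >>.
      apply: (HA _ _ (ltn0Sn (mdeg r))); apply: (Idiv Ir) => v.
      rewrite powmE cmM r'E cmU eq_sym.
      case: (eqVneq v y) => [->|nv] /=.
        rewrite add0n muln1; exact: leqW (mdeg_ge r y).
      by rewrite addn0 leq_pmull.
    have := HB _ _ Ir'y; rewrite shU => Ish.
    move: (kV _ Ish) => /negP; apply.
    apply/fsubsetP => v; rewrite mdomD in_fsetU mdomU in_fset1 => /orP[vr'|/eqP ->]; last exact: yV'.
    move: vr'; rewrite -cmE_neq0 r'E; case: (eqVneq v y) => [_|nv]; first by rewrite eqxx.
    rewrite cmE_neq0 => vr.
    have := fsubsetP sub v vr; rewrite in_fsetU in_fset1 (negbTE nv) /=; exact.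
  - exact: psi_mono pa (fsubsetU1 _ _).
  - exact: psi_mono ps (fsubsetU1 _ _).
suff : forall c V, (#|` (W `\` V)%fset| <= c)%N -> Good V -> False.
  move/(_ _ (finsupp t) (leqnn _)); apply; split.
  - move=> r Ir; exact: (kill_t HA nt Ir).
  - have := psi_neq0 ta (fsubset_refl _); rewrite psiM mulf_eq0 negb_or.
    by case/andP.
  - have := psi_neq0 ta (fsubset_refl _); rewrite psiM mulf_eq0 negb_or.
    by case/andP.
elim=> [|c IH] V hc /step [y [yWV gy]].
  by move: hc; rewrite (cardfsD1 y) yWV.
apply: (IH _ _ gy).
have -> : (W `\` (y |` V) = (W `\` V) `\ y)%fset by rewrite fsetDDl fsetUC.
by move: hc; rewrite (cardfsD1 y (W `\` V)%fset) yWV.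
Qed.
End Main2.

Theorem corollary5p10 (k : fieldType) (sigma : {rmorphism k -> k}) (n : nat)
  (I : dpoly k n -> Prop) :
  [pchar k] =i pred0 ->
  sigma_ideal sigma I ->
  monomial_ideal sigma I ->
  let S := fun u : 'I_n -> {poly nat} => I (ymon sigma u) in
  (radical_ideal I /\ well_mixed sigma I) <->
  ((forall (m : nat) (u : 'I_n -> {poly nat}),
      (0 < m)%N -> S (fun i => u i *+ m) -> S u) /\
   (forall u v : 'I_n -> {poly nat},
      S (fun i => u i + v i) -> S (fun i => u i + 'X * v i))).
Proof.
move=> _ [HI _] Hmon S; split.
  case=> Hrad Hwm; split.
    move=> m u m0; rewrite /S !(ymonE sigma) mon_Mn malgU_pow => h.
    exact: Hrad _ m m0 h.
  move=> u v; rewrite /S !(ymonE sigma) !mon_D mon_X !malgUM -(dsigmaU sigma) => h.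
  exact: Hwm.
case=> Ha Hb.
have HA : forall (t : cmonom (dvar n)) e, (0 < e)%N -> I << powm t e >> -> I << t >>.
  move=> t e e0; have [u <-] := mon_surj t; rewrite -mon_Mn -!(ymonE sigma).
  exact: Ha.
have HB : forall m1 m2 : cmonom (dvar n), I << mmul m1 m2 >> -> I << mmul m1 (sh m2) >>.
  move=> m1 m2; have [u <-] := mon_surj m1; have [v <-] := mon_surj m2.
  rewrite -mon_X -!mon_D -!(ymonE sigma); exact: Hb.
split; [exact: radical_of HI Hmon HA | exact: wm_of HI Hmon HA HB].
Qed.
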